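(* Let $r\geq2$ and let $G$ be a weighted $r$-graph of order $n$ with degrees $d_1,\ldots,d_n$. Then \[ \rho(G)^r\leq\big((r-1)!\big)^r\max_{\{i_1,\ldots,i_r\}\in E(G)}d_{i_1}\cdots d_{i_r}. \]
   Context: A weighted $r$-graph $G$ on vertex set $[n]$ is a function $G:[n]^{(r)}\to[0,\infty)$ on $r$-element subsets; its edge set is $E(G)=\{e: G(e)>0\}$. The degree of vertex $v$ is $d_v=\sum\{G(e):e\in E(G),\ v\in e\}$. The adjacency matrix $A(G)$ is the cubical $r$-matrix of order $n$ with $a_{i_1,\ldots,i_r}=G(\{i_1,\ldots,i_r\})$ if $\{i_1,\ldots,i_r\}\in E(G)$ (in particular the $i_j$ are distinct) and $0$ otherwise. $\rho(G)$ is the spectral radius of $A(G)$: the largest modulus of a complex $\lambda$ for which there is a nonzero $\mathbf{x}\in\mathbb{C}^n$ with $\lambda x_k^{r-1}=\sum_{i_2,\ldots,i_r}a_{k,i_2,\ldots,i_r}x_{i_2}\cdots x_{i_r}$ for all $k$; equivalently, $\rho(G)=\max\{|\sum a_{i_1,\ldots,i_r}x_{i_1}\cdots x_{i_r}|:\mathbf{x}\in\mathbb{R}^n,\ |\mathbf{x}|_r=1\}$. *)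

(* Defs.v *)
From HB Require Import structures.
From mathcomp Require Import all_boot all_order all_algebra.
From mathcomp Require Import boolp classical_sets reals.
Unset Printing Implicit Defensive.
Import Order.TTheory GRing.Theory Num.Theory.
Local Open Scope ring_scope.
Local Open Scope classical_set_scope.

(* A weighted r-graph on vertex set 'I_n is a function G on subsets of 'I_n,
   nonnegative, and vanishing off the r-element subsets (so it is a function
   on [n]^(r)). *)
Definition is_weighted_rgraph {R : realType} {n : nat} (r : nat) (G : {set 'I_n} -> R) :=
  (forall e : {set 'I_n}, 0 <= G e) /\ (forall e : {set 'I_n}, #|e| != r -> G e = 0).

Definition edges {R : realType} {n : nat} (r : nat) (G : {set 'I_n} -> R) : {set {set 'I_n}} :=
  [set e : {set 'I_n} | (#|e| == r) && (0 < G e)].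

Definition degree {R : realType} {n : nat} (r : nat) (G : {set 'I_n} -> R) (v : 'I_n) : R :=
  \sum_(e in edges r G | v \in e) G e.

(* Entries of the adjacency r-matrix A(G), indexed by i : 'I_r -> 'I_n
   (i.e. (i_1,...,i_r)): G({i_1..i_r}) if {i_1..i_r} is an edge
   (in particular the i_j are distinct), 0 otherwise. *)
Definition adj_entry {R : realType} {n : nat} (r : nat) (G : {set 'I_n} -> R)
  (i : {ffun 'I_r -> 'I_n}) : R :=
  if [set i k | k : 'I_r] \in edges r G then G [set i k | k : 'I_r] else 0.

Definition adj_form {R : realType} {n : nat} (r : nat) (G : {set 'I_n} -> R)
  (x : 'I_n -> R) : R :=
  \sum_(i : {ffun 'I_r -> 'I_n}) adj_entry r G i * \prod_(k < r) x (i k).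

(* Spectral radius via the variational characterization given in the paper:
   rho(G) = max { |sum a x...x| : x in R^n, |x|_r = 1 }.
   |x|_r = 1 is written as sum_i |x_i|^r = 1. *)
Definition rho {R : realType} {n : nat} (r : nat) (G : {set 'I_n} -> R) : R :=
  sup [set `|adj_form r G x| | x in [set x : 'I_n -> R | \sum_(i < n) `|x i| ^+ r = 1]].

(* Main.v *)
Require Import Defs.
From HB Require Import structures.
From mathcomp Require Import all_boot all_order all_algebra.
From mathcomp Require Import boolp classical_sets reals.
From mathcomp Require Import ring.
Import Order.TTheory GRing.Theory Num.Theory.
Local Open Scope ring_scope.

Lemma card_im (n r : nat) (e : {set 'I_n}) : #|e| = r ->
  #|[set i : {ffun 'I_r -> 'I_n} | [set i k | k : 'I_r] == e]| = r`!.
Proof.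
move=> He; rewrite -ffactnn.
have := card_inj_ffuns_on 'I_r (mem e).
rewrite card_ord.
have -> : #|mem e| = r by rewrite -He.
move=> <-; apply: eq_card => i; rewrite !inE.
apply/idP/idP.
- move=> /eqP Hi.
  have Hinj : injectiveb i.
    apply/injectiveP => a b Hab.
    have : #|[set i k | k : 'I_r]| == #|'I_r| by rewrite Hi He card_ord.
    move/imset_injP => H; exact: H.
  rewrite Hinj andbT; apply/ffun_onP => k; rewrite -Hi; exact: imset_f.
- move=> /andP[/ffun_onP Hon /injectiveP Hinj].
  rewrite eqEcard; apply/andP; split.
    by apply/fintype.subsetP => v /imsetP[k _ ->]; exact: Hon.
  by rewrite He card_imset // card_ord.
Qed.
Lemma exists_root (R : rcfType) (M : R) (r : nat) : 0 <= M -> (0 < r)%N ->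
  exists2 t : R, 0 <= t & t ^+ r = M.
Proof.
move=> M0 r0.
have le0M1 : 0 <= M + 1 by rewrite addr_ge0.
have [|t /andP[t0 _]] := @poly_ivt _ ('X^r - M%:P) _ _ le0M1.
  rewrite !hornerE expr0n eqn0Ngt r0 /= sub0r oppr_le0 M0 /= subr_ge0.
  case: r r0 => // r _.
  apply: (le_trans (_ : M <= M + 1)); first by rewrite lerDl.
  by rewrite exprS ler_peMr // exprn_ege1 // lerDr.
by rewrite rootE !hornerE subr_eq0 => /eqP; exists t.
Qed.
Lemma deg_ge0 (R : realType) n r (G : {set 'I_n} -> R) v :
  is_weighted_rgraph r G -> 0 <= degree r G v.
Proof. by move=> [G0 _]; apply: sumr_ge0 => e _; exact: G0. Qed.

Lemma deg_pos (R : realType) n r (G : {set 'I_n} -> R) e v :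
  is_weighted_rgraph r G -> e \in edges r G -> v \in e -> 0 < degree r G v.
Proof.
move=> [G0 _] He Hv; rewrite /degree (bigD1 e) /=; last by rewrite He Hv.
have : 0 < G e by move: He; rewrite inE => /andP[].
move=> Ge; apply: (lt_le_trans Ge); rewrite lerDl.
by apply: sumr_ge0 => e' _; exact: G0.
Qed.

Lemma edge_bound (R : realType) n r (G : {set 'I_n} -> R) (x : 'I_n -> R) (t : R) e :
  (0 < r)%N -> is_weighted_rgraph r G -> e \in edges r G -> 0 <= t ->
  \prod_(v in e) degree r G v <= t ^+ r ->
  \prod_(v in e) `|x v| <= t / r%:R * \sum_(v in e) `|x v| ^+ r / degree r G v.
Proof.
move=> r0 HG He t0 Hd.
have Hc : #|e| = r by move: He; rewrite inE => /andP[/eqP].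
set E := fun v => `|x v| ^+ r / degree r G v.
have E0 : forall v, 0 <= E v by move=> v; rewrite /E divr_ge0 ?exprn_ge0 // deg_ge0.
have S0 : 0 <= \sum_(v in e) E v by apply: sumr_ge0.
have := leif_AGM (I := 'I_n) (A := e) (E := E) (fun v _ => E0 v).
move=> /= [AGM _]; rewrite Hc in AGM.
have key : (\prod_(v in e) `|x v|) ^+ r <= (t / r%:R * \sum_(v in e) E v) ^+ r.
  have -> : (\prod_(v in e) `|x v|) ^+ r = \prod_(v in e) E v * \prod_(v in e) degree r G v.
    rewrite -big_split /= -prodrXl; apply: eq_bigr => v Hv.
    by rewrite /E divfK // gt_eqF // (@deg_pos _ _ _ _ _ _ HG He Hv).
  apply: (le_trans (ler_pM _ _ AGM Hd)).
  - by apply: prodr_ge0 => v _.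
  - by apply: prodr_ge0 => v _; exact: (@deg_ge0 _ _ _ _ _ HG).
  rewrite -exprMn.
  have -> : t / r%:R * \sum_(v in e) E v = ((\sum_(v in e) E v) / r%:R) * t.
    have H : forall a b c : R, a / b * c = c / b * a by move=> a b c; ring.
    exact: H.
  done.
have Hp : 0 <= \prod_(v in e) `|x v| by apply: prodr_ge0 => v _.
have Hq : 0 <= t / r%:R * \sum_(v in e) E v by rewrite mulr_ge0 // divr_ge0.
by rewrite -(ler_pXn2r r0) ?inE ?qualifE.
Qed.

Lemma adj_entry_ge0 (R : realType) n r (G : {set 'I_n} -> R) i :
  is_weighted_rgraph r G -> 0 <= adj_entry r G i.
Proof. by move=> [G0 _]; rewrite /adj_entry; case: ifP => // _; exact: G0. Qed.

Lemma form_bound (R : realType) n r (G : {set 'I_n} -> R) (x : 'I_n -> R) (t : R) :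
  (0 < r)%N -> is_weighted_rgraph r G -> \sum_(i < n) `|x i| ^+ r = 1 -> 0 <= t ->
  (forall e, e \in edges r G -> \prod_(v in e) degree r G v <= t ^+ r) ->
  `|adj_form r G x| <= (r.-1)`!%:R * t.
Proof.
move=> r0 HG Hx t0 Hd.
have G0 : forall e, 0 <= G e by case: HG.
have step1 : `|adj_form r G x| <=
    \sum_(i : {ffun 'I_r -> 'I_n}) adj_entry r G i * \prod_(k < r) `|x (i k)|.
  rewrite /adj_form; apply: (le_trans (ler_norm_sum _ _ _)); apply: ler_sum => i _.
  by rewrite normrM normr_prod ger0_norm // adj_entry_ge0.
have step2 : \sum_(i : {ffun 'I_r -> 'I_n}) adj_entry r G i * \prod_(k < r) `|x (i k)|
    = r`!%:R * \sum_(e in edges r G) G e * \prod_(v in e) `|x v|.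
  rewrite (partition_big (fun i : {ffun 'I_r -> 'I_n} => [set i k | k : 'I_r]) predT) //=.
  rewrite mulr_sumr [RHS]big_mkcond /=; apply: eq_bigr => e _.
  case: ifPn => He.
  - have Hc : #|e| = r by move: He; rewrite inE => /andP[/eqP].
    transitivity (\sum_(i : {ffun 'I_r -> 'I_n} | [set i k | k : 'I_r] == e)
                     (G e * \prod_(v in e) `|x v|)).
      apply: eq_bigr => i /eqP Hi; rewrite /adj_entry Hi He; congr (_ * _).
      have Hinj : {in 'I_r &, injective i}.
        apply/imset_injP; by rewrite Hi Hc card_ord.
      by rewrite -Hi big_imset.
    rewrite sumr_const [RHS]mulr_natl; congr (_ *+ _).
    rewrite -(@card_im _ _ _ Hc); apply: eq_card => i; by rewrite inE.
  - apply: big1 => i /eqP Hi; by rewrite /adj_entry Hi (negbTE He) mul0r.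
have step3 : \sum_(e in edges r G) G e * \prod_(v in e) `|x v| <= t / r%:R.
  apply: (le_trans (_ : _ <= \sum_(e in edges r G) G e *
     (t / r%:R * \sum_(v in e) `|x v| ^+ r / degree r G v))).
    apply: ler_sum => e He; apply: ler_wpM2l => //.
    exact: edge_bound r0 HG He t0 (Hd e He).
  under eq_bigr do rewrite mulrCA.
  rewrite -mulr_sumr; apply: ler_piMr; first by rewrite divr_ge0.
  under eq_bigr do rewrite mulr_sumr.
  rewrite (exchange_big_dep predT) //=.
  rewrite -Hx; apply: ler_sum => v _.
  rewrite -mulr_suml -/(degree r G v).
  have [->|dn0] := eqVneq (degree r G v) 0; first by rewrite mul0r exprn_ge0.
  by rewrite mulrC divfK.
apply: (le_trans step1); rewrite step2.
apply: (le_trans (ler_wpM2l _ step3)) => //.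
have Hf : r`! = (r * (r.-1)`!)%N by case: (r) r0 => // r' _; rewrite factS.
have rn0 : r%:R != 0 :> R by rewrite pnatr_eq0 -lt0n.
rewrite Hf natrM.
have H : forall a b c : R, b != 0 -> b * a * (c / b) = a * c.
  by move=> a b c b0; field.
by rewrite H.
Qed.

Theorem theorem28 (R : realType) (n r : nat) (G : {set 'I_n} -> R) :
  (2 <= r)%N ->
  is_weighted_rgraph r G ->
  rho r G ^+ r <=
    ((r.-1)`!)%:R ^+ r *
      \big[Num.max/0]_(e in edges r G) \prod_(v in e) degree r G v.
Proof.
move=> r2 HG.
have r0 : (0 < r)%N by apply: leq_trans r2.
set M := \big[Num.max/0]_(e in edges r G) \prod_(v in e) degree r G v.
have M0 : 0 <= M.
  rewrite /M; apply: (big_ind (fun y => 0 <= y)) => //.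
    by move=> a b a0 b0; rewrite le_max a0.
  by move=> e _; apply: prodr_ge0 => v _; exact: (@deg_ge0 _ _ _ _ _ HG).
have HdM : forall e, e \in edges r G -> \prod_(v in e) degree r G v <= M.
  by move=> e He; rewrite /M (bigD1 e) //= le_max lexx.
have [t t0 tM] := @exists_root _ M r M0 r0.
set B := (r.-1)`!%:R * t.
have B0 : 0 <= B by rewrite /B mulr_ge0.
have [rho0 rhoB] : 0 <= rho r G /\ rho r G <= B.
  rewrite /rho; match goal with |- context[sup ?X] => set S := X end.
  have ub : ubound S B.
    move=> y [x Hx <-]; apply: form_bound => //.
    by move=> e He; rewrite tM; exact: HdM.
  case: (pselect (exists y, S y)) => [[y Sy]|Hne].
    split; last by apply: ge_sup => //; exists y.
    apply: (le_trans (_ : 0 <= y)).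
      by case: Sy => x _ <-.
    apply: sup_upper_bound => //; split; first by exists y.
    by exists B.
  have -> : S = set0.
    apply/funext => y; apply/propext; split => // Sy; exfalso; apply: Hne; by exists y.
  by rewrite sup0 lexx.
apply: (le_trans (_ : _ <= B ^+ r)).
  by apply: lerXn2r; rewrite ?inE ?qualifE.
by rewrite /B exprMn tM.
Qed.
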